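(* Let $m\in\mathbb{N}$ and let $f$ be a multiplicative function with $f(p)\to1$ as $p\to\infty$ over primes. (a) If $\epsilon>0$, $(x_n)_{n\in\mathbb{N}}\subset[1,+\infty)$, and $\sum_{p:\,f(p)>1}(f(p)-1)=\infty$, then there exists a sequence $(a_n)_{n\in\mathbb{N}}$ of pairwise coprime positive integers such that $|f(a_n)-x_n|<\epsilon$ and $\gcd(a_n,m)=1$ for all $n\in\mathbb{N}$. (b) If $\epsilon>0$, $(x_n)_{n\in\mathbb{N}}\subset[0,1]$, and $\sum_{p:\,f(p)<1}(1-f(p))=\infty$, then there exists a sequence $(a_n)_{n\in\mathbb{N}}$ of pairwise coprime positive integers such that $|f(a_n)-x_n|<\epsilon$ and $\gcd(a_n,m)=1$ for all $n\in\mathbb{N}$.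
   Context: A multiplicative function satisfies $f(1)=1$ and $f(ab)=f(a)f(b)$ whenever $\gcd(a,b)=1$. Sums indexed by $p$ run over primes. *)

(* Defs.v *)
From HB Require Import structures.
From mathcomp Require Import all_boot all_order all_algebra.
From mathcomp Require Import reals.
Set Implicit Arguments. Unset Strict Implicit. Unset Printing Implicit Defensive.
Import Order.TTheory GRing.Theory Num.Theory.
Local Open Scope ring_scope.

Definition multiplicative_fn (R : realType) (f : nat -> R) : Prop :=
  f 1%N = 1 /\ forall a b : nat, coprime a b -> f (a * b)%N = f a * f b.

Definition tends_to_one_on_primes (R : realType) (f : nat -> R) : Prop :=
  forall e : R, 0 < e -> exists N : nat,
    forall p : nat, prime p -> (N <= p)%N -> `|f p - 1| < e.

(* sum_{p prime, f p > 1} (f p - 1) = +oo  (nonnegative terms: partial sums unbounded) *)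
Definition sum_excess_diverges (R : realType) (f : nat -> R) : Prop :=
  forall B : R, exists N : nat,
    B < \sum_(p < N | prime p && (1 < f p)) (f p - 1).

Definition sum_deficit_diverges (R : realType) (f : nat -> R) : Prop :=
  forall B : R, exists N : nat,
    B < \sum_(p < N | prime p && (f p < 1)) (1 - f p).

Definition pairwise_coprime (a : nat -> nat) : Prop :=
  forall i j : nat, i != j -> coprime (a i) (a j).

(* Main.v *)
Require Import Defs.
From HB Require Import structures.
From mathcomp Require Import all_boot all_order all_algebra.
From mathcomp Require Import reals.
From mathcomp Require Import ring lra zify.
From Stdlib Require Import ClassicalEpsilon.
Import Order.TTheory GRing.Theory Num.Theory.
Local Open Scope ring_scope.
Local Close Scope ring_scope.
Set Implicit Arguments. Unset Strict Implicit.

Lemma coprime_nocommon (a b : nat) : (0 < a)%N -> (0 < b)%N ->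
  (forall d, prime d -> d %| a -> d %| b -> False) -> coprime a b.
Proof.
move=> a0 b0 H; rewrite /coprime; apply/negPn/negP => hg.
have g0 : (0 < gcdn a b)%N by rewrite gcdn_gt0 a0.
have g1 : (1 < gcdn a b)%N by case: (gcdn a b) g0 hg => [|[|k]].
apply: (H (pdiv (gcdn a b))); first exact: pdiv_prime.
  exact: dvdn_trans (pdiv_dvd _) (dvdn_gcdl _ _).
exact: dvdn_trans (pdiv_dvd _) (dvdn_gcdr _ _).
Qed.

Definition Pa (c : pred nat) (L K : nat) : nat :=
  (\prod_(L <= p < K) (if c p then p else 1))%N.
Definition Pf (R : realType) (f : nat -> R) (c : pred nat) (L K : nat) : R :=
  \prod_(L <= p < K) (if c p then f p else 1).

Lemma Pa_rec (c : pred nat) L K : (L <= K)%N -> Pa c L K.+1 = (Pa c L K * (if c K then K else 1))%N.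
Proof. by move=> h; rewrite /Pa big_nat_recr. Qed.
Lemma Pf_rec (R : realType) (f : nat -> R) (c : pred nat) L K : (L <= K)%N -> @Pf R f c L K.+1 = (Pf f c L K * (if c K then f K else 1))%R.
Proof. by move=> h; rewrite /Pf big_nat_recr. Qed.
Lemma Pa_geq (c : pred nat) L K : (K <= L)%N -> Pa c L K = 1%N.
Proof. by move=> h; rewrite /Pa big_geq. Qed.
Lemma Pf_geq (R : realType) (f : nat -> R) (c : pred nat) L K : (K <= L)%N -> @Pf R f c L K = 1%R.
Proof. by move=> h; rewrite /Pf big_geq. Qed.

Lemma Pa_gt0 (c : pred nat) L K : (forall p, c p -> prime p) -> (0 < Pa c L K)%N.
Proof.
move=> hc; rewrite /Pa; apply: prodn_gt0 => i; case: ifP => // /hc.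
exact: prime_gt0.
Qed.

Lemma Pa_primes (c : pred nat) L K : (forall p, c p -> prime p) -> forall d, prime d ->
  d %| Pa c L K -> (L <= d < K)%N && c d.
Proof.
move=> hc d pd; elim: K => [|K IH].
  by rewrite Pa_geq // dvdn1 => /eqP d1; rewrite d1 in pd.
case: (leqP L K) => hLK; last first.
  by rewrite Pa_geq // dvdn1 => /eqP d1; rewrite d1 in pd.
rewrite Pa_rec // Euclid_dvdM // => /orP [/IH /andP [/andP [h1 h2] h3]|].
  by rewrite h1 h3 ltnS ltnW.
case: ifP => cK.
  rewrite (dvdn_prime2 pd (hc _ cK)) => /eqP ->; by rewrite hLK leqnn cK.
by rewrite dvdn1 => /eqP d1; rewrite d1 in pd.
Qed.

Lemma f_Pa (R : realType) (f : nat -> R) (c : pred nat) L K : multiplicative_fn f -> (forall p, c p -> prime p) ->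
  f (Pa c L K) = Pf f c L K.
Proof.
move=> [f1 fm] hc; elim: K => [|K IH]; first by rewrite Pa_geq // Pf_geq.
case: (leqP L K) => hLK; last by rewrite Pa_geq // Pf_geq.
rewrite Pa_rec // Pf_rec //; case: ifP => cK; last by rewrite !muln1 GRing.mulr1.
rewrite fm ?IH //; apply: coprime_nocommon; first exact: Pa_gt0.
  exact: prime_gt0 (hc _ cK).
move=> d pd /(Pa_primes hc pd) /andP [/andP [_ h] _].
rewrite (dvdn_prime2 pd (hc _ cK)) => /eqP dK; by rewrite dK ltnn in h.
Qed.

Local Open Scope ring_scope.
Local Close Scope ring_scope.

Lemma assemble (m : nat) (Q : nat -> nat -> Prop) : (0 < m)%N ->
  (forall n L, exists KA : nat * nat, (L <= KA.1)%N /\ (0 < KA.2)%N /\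
      (forall d, prime d -> d %| KA.2 -> (L <= d < KA.1)%N) /\ Q n KA.2) ->
  exists a : nat -> nat, pairwise_coprime a /\
     forall n, (0 < a n)%N /\ Q n (a n) /\ coprime (a n) m.
Proof.
move=> m0 hs.
pose g n L := proj1_sig (constructive_indefinite_description _ (hs n L)).
have gP n L := proj2_sig (constructive_indefinite_description _ (hs n L)).
pose B := fix B n := match n with 0 => m.+1 | k.+1 => (g k (B k)).1 end.
have BS n : B n.+1 = (g n (B n)).1 by [].
have Bmono i j : (i <= j)%N -> (B i <= B j)%N.
  elim: j => [|j IH]; first by rewrite leqn0 => /eqP ->.
  rewrite leq_eqVlt => /orP [/eqP ->//|]; rewrite ltnS => /IH h.
  apply: leq_trans h _; rewrite BS; by case: (gP j (B j)).
exists (fun n => (g n (B n)).2).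
have prim n d : prime d -> d %| (g n (B n)).2 -> (B n <= d < B n.+1)%N.
  by move=> pd hd; rewrite BS; case: (gP n (B n)) => _ [_ [H _]]; apply: H.
have pos n : (0 < (g n (B n)).2)%N by case: (gP n (B n)) => _ [].
split.
  move=> i j; wlog lij : i j / (i < j)%N.
    move=> W ne; case: (ltngtP i j) => h; first exact: W h ne.
      by rewrite coprime_sym; apply: W h _; rewrite eq_sym.
    by rewrite h eqxx in ne.
  move=> _; apply: coprime_nocommon => // d pd hi hj.
  move: (prim i d pd hi) (prim j d pd hj) => /andP [_ h1] /andP [h2 _].
  have := Bmono _ _ lij; move: h1 h2; lia.
move=> n; split; first exact: pos.
split; first by case: (gP n (B n)) => _ [_ [_]].
apply: coprime_nocommon => // d pd hi hm.
move: (prim n d pd hi) => /andP [h1 _].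
have := Bmono 0 n isT; have := dvdn_leq m0 hm; simpl; move: h1; lia.
Qed.

Local Open Scope ring_scope.
Set Implicit Arguments. Unset Strict Implicit.

Lemma sum_split (R : realType) (g : nat -> R) (c : pred nat) (L N : nat) :
  (forall p, c p -> 0 <= g p) ->
  \sum_(p < N | c p) g p <=
  \sum_(p < L | c p) g p + \sum_(L <= p < maxn N L | c p) g p.
Proof.
move=> hg; rewrite -!big_mkord.
rewrite -(big_cat_nat (leq0n L) (leq_maxr N L)).
rewrite (big_cat_nat (leq0n N) (leq_maxl N L)) /= lerDl.
exact: sumr_ge0.
Qed.

Definition Sf (R : realType) (g : nat -> R) (c : pred nat) (L K : nat) : R :=
  \sum_(L <= p < K | c p) g p.
Lemma Sf_rec (R : realType) (g : nat -> R) (c : pred nat) L K : (L <= K)%N ->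
  Sf g c L K.+1 = Sf g c L K + (if c K then g K else 0).
Proof. by move=> h; rewrite /Sf big_mkcond big_nat_recr //= -big_mkcond. Qed.
Lemma Sf_geq (R : realType) (g : nat -> R) (c : pred nat) L K : (K <= L)%N -> Sf g c L K = 0.
Proof. by move=> h; rewrite /Sf big_geq. Qed.
Lemma Sf_ge0 (R : realType) (g : nat -> R) (c : pred nat) L K :
  (forall p, c p -> 0 <= g p) -> 0 <= Sf g c L K.
Proof. by move=> h; apply: sumr_ge0. Qed.

Lemma stepA (R : realType) (f : nat -> R) (x eps : R) (L : nat) :
  multiplicative_fn f -> tends_to_one_on_primes f -> sum_excess_diverges f ->
  0 < eps -> 1 <= x ->
  exists KA : nat * nat, (L <= KA.1)%N /\ (0 < KA.2)%N /\
    (forall d, prime d -> (d %| KA.2)%N -> (L <= d < KA.1)%N) /\ `|f KA.2 - x| < eps.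
Proof.
move=> hm ht hd e0 x1.
pose c := fun p => prime p && (1 < f p).
have cprime p : c p -> prime p by case/andP.
have x0 : 0 < x by lra.
pose de := eps / x.
have de0 : 0 < de by apply: divr_gt0.
have hde : de * x = eps by rewrite /de divfK // gt_eqF.
have [N hN] := ht de de0.
pose L' := maxn L N.
pose P K := Pf f c L' K.
pose S K := Sf (fun p => f p - 1) c L' K.
have S0 K : 0 <= S K by apply: Sf_ge0 => p /andP [_ h]; lra.
have F1 K : 1 + S K <= P K.
  elim: K => [|K IH]; first by rewrite /P /S Pf_geq // Sf_geq // addr0.
  case: (leqP L' K) => hK; last by rewrite /P /S Pf_geq // Sf_geq // addr0.
  rewrite /P /S Pf_rec // Sf_rec //; case: ifP => cK; last by rewrite mulr1 addr0.
  have := S0 K; move: IH; rewrite -/(P K) -/(S K) => IH S0K.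
  have fK : 1 < f K by case/andP: cK.
  nra.
have [K1 hK1] : exists K, (L' <= K)%N && (x - eps < P K).
  set C := \sum_(p < L' | c p) (f p - 1).
  have [N' hN'] := hd (x + C).
  have hN2 : x + C < \sum_(p < N' | c p) (f p - 1) := hN'.
  exists (maxn N' L'); rewrite leq_maxr /=.
  have hs : \sum_(p < N' | c p) (f p - 1) <= C + S (maxn N' L').
    by apply: sum_split => p /andP [_ h]; lra.
  have := F1 (maxn N' L').
  move: hs hN2; set T := \sum_(p < N' | c p) (f p - 1); set U := S _; set V := P _.
  lra.
have hex : exists K, (fun K => (L' <= K)%N && (x - eps < P K)) K by exists K1.
case: (ex_minnP hex) => K0 /andP [hLK0 hPK0] hmin.
exists (K0, Pa c L' K0); split => /=.
  exact: leq_trans (leq_maxl L N) hLK0.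
split; first exact: Pa_gt0.
split.
  move=> d pd /(Pa_primes cprime pd) /andP [/andP [h1 h2] _]; rewrite h2 andbT.
  exact: leq_trans (leq_maxl L N) h1.
rewrite (@f_Pa R f c L' K0 hm cprime) -/(P K0).
case: (ltnP L' K0) => hlt; last first.
  have P1 : P K0 = 1 by rewrite /P Pf_geq.
  rewrite P1 in hPK0 *; rewrite ltr_norml; apply/andP; split; lra.
destruct K0 as [|k]; first by rewrite ltn0 in hlt.
rewrite ltnS in hlt.
have hk : ~~ (x - eps < P k).
  by apply/negP => h; have := hmin k; rewrite hlt h ltnn => /(_ isT).
rewrite -leNgt in hk.
move: hPK0; rewrite /P Pf_rec // -/(P k); case: ifP => ck; last first.
  by rewrite mulr1 => h; lra.
move=> hPK0.
have hfk : `|f k - 1| < de.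
  by apply: hN; [case/andP: ck | exact: leq_trans (leq_maxr L N) hlt].
rewrite ltr_norml in hfk; case/andP: hfk => hf1 hf2.
have := F1 k; have := S0 k => s0 f1.
rewrite ltr_norml; apply/andP; split; first by lra.
nra.
Qed.

Lemma stepB (R : realType) (f : nat -> R) (x eps : R) (L : nat) :
  multiplicative_fn f -> tends_to_one_on_primes f -> sum_deficit_diverges f ->
  0 < eps -> 0 <= x <= 1 ->
  exists KA : nat * nat, (L <= KA.1)%N /\ (0 < KA.2)%N /\
    (forall d, prime d -> (d %| KA.2)%N -> (L <= d < KA.1)%N) /\ `|f KA.2 - x| < eps.
Proof.
move=> hm ht hd e0 /andP [x0 x1].
pose c := fun p => prime p && (f p < 1).
have cprime p : c p -> prime p by case/andP.
have [N1 hN1] := ht eps e0.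
have [N2 hN2] := ht 1 ltr01.
pose L' := maxn L (maxn N1 N2).
have hL1 p : (L' <= p)%N -> (N1 <= p)%N by move=> h; apply: leq_trans h; lia.
have hL2 p : (L' <= p)%N -> (N2 <= p)%N by move=> h; apply: leq_trans h; lia.
pose P K := Pf f c L' K.
pose S K := Sf (fun p => 1 - f p) c L' K.
have S0 K : 0 <= S K by apply: Sf_ge0 => p /andP [_ h]; lra.
have F1 K : 0 <= P K /\ P K * (1 + S K) <= 1.
  elim: K => [|K IH]; first by rewrite /P /S Pf_geq // Sf_geq // addr0 mulr1; lra.
  case: (leqP L' K) => hK; last by rewrite /P /S Pf_geq // Sf_geq // addr0 mulr1; lra.
  rewrite /P /S Pf_rec // Sf_rec //; case: ifP => cK; last by rewrite mulr1 addr0.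
  have := S0 K; move: IH; rewrite -/(P K) -/(S K) => -[IH1 IH2] S0K.
  have fK : f K < 1 by case/andP: cK.
  have fK0 : 0 < f K.
    have := hN2 K (cprime _ cK) (hL2 _ hK); rewrite ltr_norml => /andP [h _]; lra.
  have h1 : 0 <= P K * ((1 - f K) * (1 - f K) + S K * (1 - f K)).
    apply: mulr_ge0 => //; apply: addr_ge0; apply: mulr_ge0; lra.
  split; first by apply: mulr_ge0; lra.
  have -> : P K * f K * (1 + (S K + (1 - f K))) =
    P K * (1 + S K) - P K * ((1 - f K) * (1 - f K) + S K * (1 - f K)) by ring.
  lra.
have [K1 hK1] : exists K, (L' <= K)%N && (P K < x + eps).
  set C := \sum_(p < L' | c p) (1 - f p).
  have xe : 0 < x + eps by lra.
  have [N' hN'] := hd ((x + eps)^-1 + C).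
  have hN2' : (x + eps)^-1 + C < \sum_(p < N' | c p) (1 - f p) := hN'.
  exists (maxn N' L'); rewrite leq_maxr /=.
  have hs : \sum_(p < N' | c p) (1 - f p) <= C + S (maxn N' L').
    by apply: sum_split => p /andP [_ h]; lra.
  have [h1 h2] := F1 (maxn N' L'); have := S0 (maxn N' L').
  move: hs hN2' h1 h2; set T := \sum_(p < N' | c p) (1 - f p); set U := S _; set V := P _.
  move=> hs hN2' h1 h2 h3.
  have hU : (x + eps)^-1 < U by lra.
  have hU2 : 1 < U * (x + eps) by rewrite -ltr_pdivrMr // div1r.
  rewrite ltNge; apply/negP => hV; nra.
have hex : exists K, (fun K => (L' <= K)%N && (P K < x + eps)) K by exists K1.
case: (ex_minnP hex) => K0 /andP [hLK0 hPK0] hmin.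
exists (K0, Pa c L' K0); split => /=.
  exact: leq_trans (leq_maxl L _) hLK0.
split; first exact: Pa_gt0.
split.
  move=> d pd /(Pa_primes cprime pd) /andP [/andP [h1 h2] _]; rewrite h2 andbT.
  exact: leq_trans (leq_maxl L _) h1.
rewrite (@f_Pa R f c L' K0 hm cprime) -/(P K0).
case: (ltnP L' K0) => hlt; last first.
  have P1 : P K0 = 1 by rewrite /P Pf_geq.
  rewrite P1 in hPK0 *; rewrite ltr_norml; apply/andP; split; lra.
destruct K0 as [|k]; first by rewrite ltn0 in hlt.
rewrite ltnS in hlt.
have hk : ~~ (P k < x + eps).
  by apply/negP => h; have := hmin k; rewrite hlt h ltnn => /(_ isT).
rewrite -leNgt in hk.
move: hPK0; rewrite /P Pf_rec // -/(P k); case: ifP => ck; last first.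
  by rewrite mulr1 => h; lra.
move=> hPK0.
have hfk : `|f k - 1| < eps by apply: hN1; [case/andP: ck | exact: hL1].
rewrite ltr_norml in hfk; case/andP: hfk => hf1 hf2.
have fk1 : f k < 1 by case/andP: ck.
have [p0 p1] := F1 k; have := S0 k => s0.
have pk1 : P k <= 1 by nra.
rewrite ltr_norml; apply/andP; split; last by lra.
nra.
Qed.

Local Open Scope ring_scope.
Unset Implicit Arguments.

Theorem lemma2p2 (R : realType) (m : nat) (f : nat -> R) :
  (0 < m)%N -> multiplicative_fn f -> tends_to_one_on_primes f ->
  (forall (eps : R) (x : nat -> R),
      0 < eps -> (forall n, 1 <= x n) -> sum_excess_diverges f ->
      exists a : nat -> nat,
        pairwise_coprime a /\
        forall n, (0 < a n)%N /\ `|f (a n) - x n| < eps /\ coprime (a n) m)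
  /\
  (forall (eps : R) (x : nat -> R),
      0 < eps -> (forall n, 0 <= x n <= 1) -> sum_deficit_diverges f ->
      exists a : nat -> nat,
        pairwise_coprime a /\
        forall n, (0 < a n)%N /\ `|f (a n) - x n| < eps /\ coprime (a n) m).
Proof.
move=> m0 hm ht; split=> eps x e0 hx hd;
  apply: (@assemble m (fun n a => `|f a - x n| < eps)) => // n L.
  exact: stepA.
exact: stepB.
Qed.
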